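(* Let $M=(V,\delta)$ be an $n$-point metric and let $r':V\to\mathbb{R}^+$ be a bounding function such that $SDG(M,r')$ is connected. Then $OPT(M)\le OPT(M,r') = O(\log n)\cdot OPT(M)$. More precisely, letting $T$ be the minimum spanning tree of $SDG(M,r')$ and defining $r(v)$ as the weight of the heaviest edge of $T$ incident to $v$, the assignment $r$ is feasible for the bounded problem and $COST(r)\le 2w(T) = O(\log n)\cdot w(MST(M)) = O(\log n)\cdot OPT(M)$.
   Context: For a metric $M=(V,\delta)$ and $r:V\to\mathbb{R}^+$, $SDG(M,r)$ is the graph on $V$ containing edge $(u,v)$ of weight $\delta(u,v)$ iff $r(u)\ge\delta(u,v)$ and $r(v)\ge\delta(u,v)$. The cost of a range assignment $r$ is $COST(r)=\sum_{v\in V} r(v)$. Given a bounding function $r'$, the bounded range assignment problem asks for $r$ with $r(v)\le r'(v)$ for all $v$, $SDG(M,r)$ connected, and minimum $COST(r)$; its optimal cost is $OPT(M,r')$. The unbounded problem is the case $r'(v)=diam(M)$ (the largest pairwise distance) for all $v$; its optimal cost is $OPT(M)$. $MST(M)$ is the minimum spanning tree of the complete weighted graph on $V$ with weights $\delta$. *)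

(* Defs.v *)
From Stdlib Require Import Reals List Arith.
Import ListNotations.
Open Scope R_scope.

Definition is_metric (n : nat) (d : nat -> nat -> R) : Prop :=
  (forall u v, (u < n)%nat -> (v < n)%nat -> 0 <= d u v) /\
  (forall u v, (u < n)%nat -> (v < n)%nat -> (d u v = 0 <-> u = v)) /\
  (forall u v, (u < n)%nat -> (v < n)%nat -> d u v = d v u) /\
  (forall u v w, (u < n)%nat -> (v < n)%nat -> (w < n)%nat ->
     d u w <= d u v + d v w).

Fixpoint walk (E : nat -> nat -> Prop) (u : nat) (p : list nat) (v : nat) : Prop :=
  match p with
  | [] => u = v
  | x :: p' => E u x /\ walk E x p' v
  end.

Definition connected (n : nat) (E : nat -> nat -> Prop) : Prop :=
  forall u v, (u < n)%nat -> (v < n)%nat -> exists p, walk E u p v.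

Definition SDG (n : nat) (d : nat -> nat -> R) (r : nat -> R) (u v : nat) : Prop :=
  (u < n)%nat /\ (v < n)%nat /\ u <> v /\ d u v <= r u /\ d u v <= r v.

Definition complete (n : nat) (u v : nat) : Prop :=
  (u < n)%nat /\ (v < n)%nat /\ u <> v.

Fixpoint sumR (l : list R) : R :=
  match l with [] => 0 | x :: l' => x + sumR l' end.

Definition COST (n : nat) (r : nat -> R) : R := sumR (map r (seq 0 n)).

Definition diam (n : nat) (d : nat -> nat -> R) : R :=
  fold_right Rmax 0 (flat_map (fun u => map (fun v => d u v) (seq 0 n)) (seq 0 n)).

Definition feasible (n : nat) (d : nat -> nat -> R) (rb r : nat -> R) : Prop :=
  (forall v, (v < n)%nat -> 0 <= r v /\ r v <= rb v) /\ connected n (SDG n d r).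

Definition is_OPT (n : nat) (d : nat -> nat -> R) (rb : nat -> R) (o : R) : Prop :=
  (exists r, feasible n d rb r /\ COST n r = o) /\
  (forall r, feasible n d rb r -> o <= COST n r).

(* OPT(M): unbounded problem, r'(v) = diam(M) for all v. *)
Definition is_OPT_unbounded (n : nat) (d : nat -> nat -> R) (o : R) : Prop :=
  is_OPT n d (fun _ => diam n d) o.

Definition tree_adj (T : list (nat * nat)) (u v : nat) : Prop :=
  In (u, v) T \/ In (v, u) T.

Definition is_spanning_tree (n : nat) (E : nat -> nat -> Prop)
    (T : list (nat * nat)) : Prop :=
  (forall e, In e T -> E (fst e) (snd e)) /\
  length T = (n - 1)%nat /\
  connected n (tree_adj T).

Definition weight (d : nat -> nat -> R) (T : list (nat * nat)) : R :=
  sumR (map (fun e => d (fst e) (snd e)) T).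

Definition is_MST (n : nat) (d : nat -> nat -> R) (E : nat -> nat -> Prop)
    (T : list (nat * nat)) : Prop :=
  is_spanning_tree n E T /\
  (forall T', is_spanning_tree n E T' -> weight d T <= weight d T').

Definition heaviest_incident (d : nat -> nat -> R) (T : list (nat * nat)) (v : nat) : R :=
  fold_right Rmax 0
    (map (fun e => d (fst e) (snd e))
       (filter (fun e => orb (Nat.eqb (fst e) v) (Nat.eqb (snd e) v)) T)).

(* Main.v *)
Require Import Defs.
From Stdlib Require Import Reals List Arith Lia Lra Classical.
Import ListNotations.
Open Scope R_scope.


Lemma sumR_app l1 l2 : sumR (l1 ++ l2) = sumR l1 + sumR l2.
Proof. induction l1; simpl; lra. Qed.

Lemma sum_map_le {A} (f g : A -> R) l :
  (forall x, In x l -> f x <= g x) -> sumR (map f l) <= sumR (map g l).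
Proof.
  induction l as [|a l IH]; simpl; intros H; [lra|].
  assert (f a <= g a) by auto. assert (sumR (map f l) <= sumR (map g l)) by auto. lra.
Qed.

Lemma sum_map_nonneg {A} (f : A -> R) l :
  (forall x, In x l -> 0 <= f x) -> 0 <= sumR (map f l).
Proof.
  induction l as [|a l IH]; simpl; intros H; [lra|].
  assert (0 <= f a) by auto. assert (0 <= sumR (map f l)) by auto. lra.
Qed.

Lemma sum_map_plus {A} (f g : A -> R) l :
  sumR (map (fun x => f x + g x) l) = sumR (map f l) + sumR (map g l).
Proof. induction l; simpl; lra. Qed.

Lemma sum_map_scal {A} (c : R) (f : A -> R) l :
  sumR (map (fun x => c * f x) l) = c * sumR (map f l).
Proof. induction l; simpl; lra. Qed.

Lemma sum_map_const {A} (c : R) (l : list A) :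
  sumR (map (fun _ => c) l) = INR (length l) * c.
Proof. induction l; simpl length; [simpl; lra|]. rewrite S_INR. simpl. lra. Qed.

Lemma sum_map_zero {A} (l : list A) : sumR (map (fun _ => 0) l) = 0.
Proof. induction l; simpl; lra. Qed.

Lemma sum_exchange {A B} (f : A -> B -> R) l1 l2 :
  sumR (map (fun a => sumR (map (fun b => f a b) l2)) l1) =
  sumR (map (fun b => sumR (map (fun a => f a b) l1)) l2).
Proof.
  induction l1 as [|a l1 IH]; simpl.
  - rewrite sum_map_zero. reflexivity.
  - rewrite IH, <- sum_map_plus. reflexivity.
Qed.

Lemma sum_incl_NoDup {A} (f : A -> R) l l' :
  NoDup l -> incl l l' -> (forall x, In x l' -> 0 <= f x) ->
  sumR (map f l) <= sumR (map f l').
Proof.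
  revert l'. induction l as [|x l IH]; intros l' Hnd Hi Hp; simpl.
  - apply sum_map_nonneg; auto.
  - assert (Hx : In x l') by (apply Hi; left; auto).
    destruct (in_split _ _ Hx) as [a [b Hab]]. subst l'.
    rewrite map_app, sumR_app. simpl.
    inversion Hnd; subst.
    assert (sumR (map f l) <= sumR (map f (a ++ b))).
    { apply IH; auto.
      - intros y Hy. assert (Hy' : In y (a ++ x :: b)) by (apply Hi; right; auto).
        apply in_app_or in Hy'. apply in_or_app. destruct Hy' as [H|[H|H]]; auto.
        subst; contradiction.
      - intros y Hy. apply Hp. apply in_app_or in Hy. apply in_or_app.
        destruct Hy; auto. right; right; auto. }
    rewrite map_app, sumR_app in H. lra.
Qed.

Lemma fold_Rmax_ge l x : In x l -> x <= fold_right Rmax 0 l.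
Proof.
  induction l as [|a l IH]; simpl; [tauto|]. intros [H|H].
  - subst. apply Rmax_l.
  - eapply Rle_trans; [apply IH; auto|apply Rmax_r].
Qed.

Lemma fold_Rmax_le l B : 0 <= B -> (forall x, In x l -> x <= B) -> fold_right Rmax 0 l <= B.
Proof.
  induction l as [|a l IH]; simpl; intros H0 H; [auto|].
  apply Rmax_lub; auto.
Qed.

Lemma fold_Rmax_nonneg l : 0 <= fold_right Rmax 0 l.
Proof. induction l as [|a l IH]; simpl; [lra|]. eapply Rle_trans; [apply IH|apply Rmax_r]. Qed.

Lemma fold_Rmax_sum l : (forall x, In x l -> 0 <= x) -> fold_right Rmax 0 l <= sumR l.
Proof.
  induction l as [|a l IH]; simpl; intros H; [lra|].
  assert (0 <= a) by auto. assert (fold_right Rmax 0 l <= sumR l) by auto.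
  assert (0 <= fold_right Rmax 0 l) by apply fold_Rmax_nonneg.
  apply Rmax_lub; lra.
Qed.

Lemma finite_min {A} (P : A -> Prop) (f : A -> R) l :
  (exists x, In x l /\ P x) ->
  exists x, In x l /\ P x /\ forall y, In y l -> P y -> f x <= f y.
Proof.
  induction l as [|a l IH]; intros [x [Hx Px]]; [destruct Hx|].
  destruct (classic (exists x, In x l /\ P x)) as [Hex|Hn].
  - destruct (IH Hex) as [m [Hm [Pm Hmin]]].
    destruct (classic (P a /\ f a <= f m)) as [[Pa Ha]|Hna].
    + exists a. split; [left; auto|]. split; auto.
      intros y [Hy|Hy] Py; [subst; lra|]. specialize (Hmin y Hy Py). lra.
    + exists m. split; [right; auto|]. split; auto.
      intros y [Hy|Hy] Py; [|auto]. subst y.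
      destruct (Rle_dec (f m) (f a)); auto. exfalso; apply Hna; split; auto; lra.
  - destruct Hx as [Hx|Hx]; [subst|exfalso; apply Hn; eauto].
    exists x. split; [left; auto|]. split; auto.
    intros y [Hy|Hy] Py; [subst; lra|]. exfalso; apply Hn; eauto.
Qed.

Lemma walk_app E u l1 x l2 v : walk E u l1 x -> walk E x l2 v -> walk E u (l1 ++ l2) v.
Proof.
  revert u. induction l1 as [|a l1 IH]; simpl; intros u H1 H2.
  - subst; auto.
  - destruct H1; split; auto.
Qed.

Lemma walk_mono (E E' : nat -> nat -> Prop) u p v :
  (forall a b, E a b -> E' a b) -> walk E u p v -> walk E' u p v.
Proof. revert u. induction p; simpl; intros u H W; [auto|]. destruct W; split; auto. Qed.

Lemma walk_rev (E : nat -> nat -> Prop) u p v :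
  (forall a b, E a b -> E b a) -> walk E u p v -> exists p', walk E v p' u.
Proof.
  revert u. induction p as [|x p IH]; simpl; intros u Hs W.
  - subst. exists []. simpl. auto.
  - destruct W as [Hux W]. destruct (IH x Hs W) as [p' Hp'].
    exists (p' ++ [u]). eapply walk_app; eauto. simpl. auto.
Qed.

Lemma walk_cross (E : nat -> nat -> Prop) (S : list nat) u p v :
  walk E u p v -> In u S -> ~ In v S -> exists x y, In x S /\ ~ In y S /\ E x y.
Proof.
  revert u. induction p as [|a p IH]; simpl; intros u W Hu Hv.
  - subst; contradiction.
  - destruct W as [Hua W]. destruct (in_dec Nat.eq_dec a S) as [Ha|Ha].
    + eapply IH; eauto.
    + exists u, a; auto.
Qed.

Lemma walk_suffix E u a x b v : walk E u (a ++ x :: b) v -> walk E x b v.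
Proof.
  revert u. induction a as [|y a IH]; simpl; intros u W; [tauto|]. destruct W; eauto.
Qed.

Lemma walk_nodup E u p v : walk E u p v -> exists p', walk E u p' v /\ NoDup (u :: p') /\ incl p' p.
Proof.
  revert u. induction p as [|x p IH]; simpl; intros u W.
  - exists []. simpl. repeat split; auto. constructor; [simpl; auto|constructor]. intros a Ha; destruct Ha.
  - destruct W as [Hux W]. destruct (IH x W) as [q [Wq [Nq Iq]]].
    destruct (Nat.eq_dec u x) as [Heq|Hne].
    + subst. exists q. repeat split; auto. intros a Ha; right; auto.
    + destruct (in_dec Nat.eq_dec u q) as [Hin|Hnin].
      * destruct (in_split _ _ Hin) as [a [b Hab]]. subst q.
        exists b. split; [eapply walk_suffix; eauto|].
        split.
        -- inversion Nq; subst. apply NoDup_app_remove_l in H2. auto.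
        -- intros y Hy. right. apply Iq. apply in_or_app. right; right; auto.
      * exists (x :: q). split; [simpl; auto|]. split.
        -- constructor; auto. simpl. intros [H|H]; [congruence|contradiction].
        -- intros y [Hy|Hy]; [left; auto|right; auto].
Qed.

Lemma walk_vertices (E : nat -> nat -> Prop) (Q : nat -> Prop) u p v :
  (forall a b, E a b -> Q b) -> walk E u p v -> forall x, In x p -> Q x.
Proof.
  revert u. induction p as [|a p IH]; simpl; intros u H W x Hx; [destruct Hx|].
  destruct W as [Ha W]. destruct Hx as [Hx|Hx]; [subst; eauto|eauto].
Qed.

Definition vis (T : list (nat * nat)) : list nat := 0%nat :: map snd T.

Fixpoint prim (E : nat -> nat -> Prop) (w : nat -> nat -> R) (n : nat) (T : list (nat * nat)) : Prop :=
  match T with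
  | [] => True
  | (p, v) :: T' => prim E w n T' /\ In p (vis T') /\ ~ In v (vis T') /\ (v < n)%nat /\ E p v /\
      (forall x y, In x (vis T') -> ~ In y (vis T') -> (y < n)%nat -> E x y -> w p v <= w x y)
  end.

Lemma prim_nodup E w n T : prim E w n T -> NoDup (vis T).
Proof.
  induction T as [|[p v] T IH]; simpl; intros H.
  - constructor; [simpl; auto|constructor].
  - destruct H as [H [_ [Hv _]]]. specialize (IH H). unfold vis in *. simpl in *.
    inversion IH; subst. constructor.
    + simpl. intros [Hc|Hc]; [apply Hv; left; auto| contradiction].
    + constructor; auto.
Qed.

Lemma prim_lt E w n T : (0 < n)%nat -> prim E w n T -> forall x, In x (vis T) -> (x < n)%nat.
Proof.
  induction T as [|[p v] T IH]; simpl; intros Hn H x Hx.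
  - destruct Hx as [Hx|[]]; lia.
  - destruct H as [H [_ [_ [Hvn _]]]]. unfold vis in Hx; simpl in Hx.
    destruct Hx as [Hx|[Hx|Hx]]; [lia|subst; auto|]. apply IH; auto. right; auto.
Qed.

Lemma prim_edges E w n T : prim E w n T -> forall e, In e T -> E (fst e) (snd e).
Proof.
  induction T as [|[p v] T IH]; simpl; intros H e He; [destruct He|].
  destruct H as [H [_ [_ [_ [Hpv _]]]]]. destruct He as [He|He]; [subst; auto|auto].
Qed.

Lemma tree_adj_cons e T u v : tree_adj T u v -> tree_adj (e :: T) u v.
Proof. unfold tree_adj; simpl; tauto. Qed.

Lemma prim_reach E w n T : prim E w n T -> forall x, In x (vis T) -> exists p, walk (tree_adj T) 0%nat p x.
Proof.
  induction T as [|[p v] T IH]; simpl; intros H x Hx.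
  - destruct Hx as [Hx|[]]. subst. exists []. simpl. auto.
  - destruct H as [H [Hp _]]. unfold vis in Hx; simpl in Hx.
    destruct Hx as [Hx|[Hx|Hx]].
    + subst. exists []. simpl; auto.
    + subst. destruct (IH H p Hp) as [q Hq]. exists (q ++ [x]). eapply walk_app.
      * eapply walk_mono; [|eauto]. apply tree_adj_cons.
      * simpl. split; auto. left. left. auto.
    + destruct (IH H x (or_intror Hx)) as [q Hq]. exists q. eapply walk_mono; [|eauto]. apply tree_adj_cons.
Qed.

Lemma pigeon_full l n : NoDup l -> (forall x, In x l -> (x < n)%nat) -> (n <= length l)%nat ->
  forall y, (y < n)%nat -> In y l.
Proof.
  intros Hnd Hl Hlen y Hy.
  assert (incl (seq 0 n) l).
  { apply (NoDup_length_incl Hnd). rewrite length_seq; auto.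
    intros x Hx. apply in_seq. specialize (Hl x Hx). lia. }
  apply H. apply in_seq. lia.
Qed.

Lemma pigeon_miss l n : NoDup l -> (length l < n)%nat -> exists y, (y < n)%nat /\ ~ In y l.
Proof.
  intros Hnd Hlen. apply NNPP. intros Hc.
  assert (incl (seq 0 n) l).
  { intros y Hy. apply in_seq in Hy. apply NNPP. intros Hn. apply Hc. exists y. split; [lia|auto]. }
  apply NoDup_incl_length in H; [|apply seq_NoDup]. rewrite length_seq in H. lia.
Qed.

Lemma prim_exists (E : nat -> nat -> Prop) w n :
  (forall a b, E a b -> (a < n)%nat /\ (b < n)%nat) -> connected n E -> (0 < n)%nat ->
  forall k, (k <= n - 1)%nat -> exists T, prim E w n T /\ length T = k.
Proof.
  intros HE Hc Hn. induction k as [|k IH]; intros Hk.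
  - exists []. simpl. auto.
  - destruct IH as [T [HT Hl]]; [lia|].
    assert (Hnd := prim_nodup _ _ _ _ HT).
    destruct (pigeon_miss (vis T) n Hnd) as [y [Hy Hyn]].
    { unfold vis. simpl. rewrite length_map. lia. }
    destruct (Hc 0%nat y Hn Hy) as [q Hq].
    assert (H0in : In 0%nat (vis T)) by (left; auto).
    destruct (walk_cross E (vis T) _ _ _ Hq H0in Hyn) as [x0 [y0 [Hx0 [Hy0 Hxy0]]]].
    destruct (finite_min (fun e => In (fst e) (vis T) /\ ~ In (snd e) (vis T) /\ (snd e < n)%nat /\ E (fst e) (snd e))
      (fun e => w (fst e) (snd e)) (list_prod (seq 0 n) (seq 0 n))) as [[p v] [Hin [[Hp [Hv [Hvn Hpv]]] Hmin]]].
    { exists (x0, y0). destruct (HE _ _ Hxy0). split.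
      - apply in_prod; apply in_seq; lia.
      - simpl. repeat split; auto. }
    exists ((p, v) :: T). simpl. split; [|lia].
    repeat split; auto.
    intros x1 y1 Hx1 Hy1 Hy1n Hxy1. apply (Hmin (x1, y1)).
    + destruct (HE _ _ Hxy1). apply in_prod; apply in_seq; lia.
    + simpl. auto.
Qed.

Lemma prim_spanning E w n T : (0 < n)%nat -> prim E w n T -> length T = (n - 1)%nat ->
  is_spanning_tree n E T.
Proof.
  intros Hn HT Hl. split; [eapply prim_edges; eauto|]. split; auto.
  assert (Hall : forall y, (y < n)%nat -> In y (vis T)).
  { apply pigeon_full. eapply prim_nodup; eauto. eapply prim_lt; eauto.
    unfold vis; simpl; rewrite length_map. lia. }
  intros u v Hu Hv.
  destruct (prim_reach _ _ _ _ HT u (Hall u Hu)) as [p1 H1].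
  destruct (prim_reach _ _ _ _ HT v (Hall v Hv)) as [p2 H2].
  destruct (walk_rev (tree_adj T) _ _ _ ltac:(unfold tree_adj; tauto) H1) as [p1' H1'].
  exists (p1' ++ p2). eapply walk_app; eauto.
Qed.

Definition edges_ok (n : nat) (T : list (nat * nat)) :=
  forall e, In e T -> (fst e < n)%nat /\ (snd e < n)%nat /\ fst e <> snd e.

Lemma sum_filter {A} (P : A -> bool) (f : A -> R) l :
  sumR (map f (filter P l)) = sumR (map (fun x => if P x then f x else 0) l).
Proof. induction l as [|a l IH]; simpl; [auto|]. destruct (P a); simpl; lra. Qed.

Lemma sum_eqb_le (a : nat) (c : R) l : 0 <= c -> NoDup l ->
  sumR (map (fun v => if Nat.eqb a v then c else 0) l) <= c.
Proof.
  intros Hc. induction l as [|x l IH]; simpl; intros Hnd; [lra|].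
  inversion Hnd; subst.
  destruct (Nat.eqb_spec a x).
  - subst. assert (sumR (map (fun v => if Nat.eqb x v then c else 0) l) = 0).
    { clear IH H2 Hnd. induction l as [|y l IH2]; simpl; [auto|].
      destruct (Nat.eqb_spec x y); [subst; exfalso; apply H1; left; auto|].
      rewrite IH2; [lra|]. intros Hc'; apply H1; right; auto. }
    lra.
  - specialize (IH H2). lra.
Qed.

Lemma h_nonneg d T v : 0 <= heaviest_incident d T v.
Proof. apply fold_Rmax_nonneg. Qed.

Lemma h_le d T r v :
  (forall e, In e T -> d (fst e) (snd e) <= r (fst e) /\ d (fst e) (snd e) <= r (snd e)) ->
  0 <= r v -> heaviest_incident d T v <= r v.
Proof.
  intros H H0. apply fold_Rmax_le; auto. intros x Hx.
  apply in_map_iff in Hx. destruct Hx as [e [He Hin]]. subst.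
  apply filter_In in Hin. destruct Hin as [Hin Hc].
  destruct (H e Hin). apply Bool.orb_true_iff in Hc.
  destruct Hc as [Hc|Hc]; apply Nat.eqb_eq in Hc; rewrite <- Hc; auto.
Qed.

Lemma h_ge d T e : In e T ->
  d (fst e) (snd e) <= heaviest_incident d T (fst e) /\ d (fst e) (snd e) <= heaviest_incident d T (snd e).
Proof.
  intros He. split; apply fold_Rmax_ge; apply in_map_iff; exists e; split; auto;
  apply filter_In; split; auto; apply Bool.orb_true_iff; [left|right]; apply Nat.eqb_refl.
Qed.

Lemma metric_sym n d u v : is_metric n d -> (u < n)%nat -> (v < n)%nat -> d u v = d v u.
Proof. intros [_ [_ [H _]]]. auto. Qed.

Lemma metric_nonneg n d u v : is_metric n d -> (u < n)%nat -> (v < n)%nat -> 0 <= d u v.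
Proof. intros [H _]. auto. Qed.

Lemma h_conn n d T : is_metric n d -> edges_ok n T -> connected n (tree_adj T) ->
  connected n (SDG n d (heaviest_incident d T)).
Proof.
  intros Hm Hok Hc u v Hu Hv. destruct (Hc u v Hu Hv) as [p Hp]. exists p.
  eapply walk_mono; [|eauto]. intros a b [Hab|Hab].
  - destruct (Hok _ Hab) as [Ha [Hb Hne]]. destruct (h_ge d T _ Hab). simpl in *.
    unfold SDG. repeat split; auto.
  - destruct (Hok _ Hab) as [Hb [Ha Hne]]. destruct (h_ge d T _ Hab). simpl in *.
    rewrite (metric_sym n d b a Hm) in * by auto.
    unfold SDG. repeat split; auto.
Qed.

Lemma h_cost n d T : is_metric n d -> edges_ok n T ->
  COST n (heaviest_incident d T) <= 2 * weight d T.
Proof.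
  intros Hm Hok. unfold COST, weight, heaviest_incident.
  set (w := fun e : nat * nat => d (fst e) (snd e)).
  assert (Hw : forall e, In e T -> 0 <= w e).
  { intros e He. destruct (Hok e He) as [? [? ?]]. unfold w. eapply metric_nonneg; eauto. }
  apply Rle_trans with (sumR (map (fun v => sumR (map (fun e =>
     if (Nat.eqb (fst e) v || Nat.eqb (snd e) v)%bool then w e else 0) T)) (seq 0 n))).
  - apply sum_map_le. intros v _. rewrite <- sum_filter.
    apply fold_Rmax_sum. intros x Hx. apply in_map_iff in Hx. destruct Hx as [e [He Hin]].
    subst. apply filter_In in Hin. apply Hw; tauto.
  - rewrite sum_exchange. rewrite <- sum_map_scal. apply sum_map_le. intros e He.
    apply Rle_trans with (sumR (map (fun v => (if Nat.eqb (fst e) v then w e else 0) +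
                                     (if Nat.eqb (snd e) v then w e else 0)) (seq 0 n))).
    + apply sum_map_le. intros v _. specialize (Hw e He).
      destruct (Nat.eqb (fst e) v), (Nat.eqb (snd e) v); simpl; lra.
    + rewrite sum_map_plus. specialize (Hw e He).
      pose proof (sum_eqb_le (fst e) (w e) (seq 0 n) Hw (seq_NoDup _ _)).
      pose proof (sum_eqb_le (snd e) (w e) (seq 0 n) Hw (seq_NoDup _ _)). lra.
Qed.

Lemma d_le_diam n d u v : (u < n)%nat -> (v < n)%nat -> d u v <= diam n d.
Proof.
  intros Hu Hv. apply fold_Rmax_ge. apply in_flat_map. exists u. split; [apply in_seq; lia|].
  apply in_map_iff. exists v. split; auto. apply in_seq; lia.
Qed.

Lemma diam_nonneg n d : 0 <= diam n d.
Proof. apply fold_Rmax_nonneg. Qed.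

Lemma h_le_diam n d T v : edges_ok n T -> heaviest_incident d T v <= diam n d.
Proof.
  intros Hok. apply fold_Rmax_le; [apply diam_nonneg|]. intros x Hx.
  apply in_map_iff in Hx. destruct Hx as [e [He Hin]]. subst.
  apply filter_In in Hin. destruct (Hok e (proj1 Hin)) as [? [? ?]]. apply d_le_diam; auto.
Qed.

Definition fball (d : nat -> nat -> R) (r : nat -> R) (dl : R) (q v : nat) : R :=
  if Rlt_dec (d q v) dl then r v else 0.

Lemma fball_nonneg d r dl q v : 0 <= r v -> 0 <= fball d r dl q v.
Proof. unfold fball. destruct (Rlt_dec _ _); lra. Qed.

Lemma telescope n d r dl q u p v0 :
  is_metric n d -> (forall v, (v < n)%nat -> 0 <= r v) -> (q < n)%nat -> (u < n)%nat ->
  walk (SDG n d r) u p v0 -> d q u < dl -> dl <= d q v0 ->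
  dl - d q u <= sumR (map (fball d r dl q) (u :: p)).
Proof.
  intros Hm Hr Hq. revert u. induction p as [|x p IH]; intros u Hu W H1 H2.
  - simpl in W. subst. lra.
  - destruct W as [[_ [Hx [_ [Hux _]]]] W].
    assert (Htri : d q x <= d q u + d u x) by (destruct Hm as [_ [_ [_ Ht]]]; auto).
    simpl. unfold fball at 1. destruct (Rlt_dec (d q u) dl); [|lra].
    destruct (Rlt_dec (d q x) dl) as [Hlt|Hge].
    + specialize (IH x Hx W Hlt H2). simpl in IH. lra.
    + assert (0 <= sumR (map (fball d r dl q) (x :: p))).
      { apply sum_map_nonneg. intros y Hy. apply fball_nonneg. apply Hr.
        destruct Hy as [Hy|Hy]; [subst; auto|].
        eapply (walk_vertices (SDG n d r) (fun b => (b < n)%nat)); eauto.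
        intros a b [_ [Hb _]]; auto. }
      simpl in H. lra.
Qed.

Lemma ball_sum n d r dl q q' :
  is_metric n d -> (forall v, (v < n)%nat -> 0 <= r v) -> connected n (SDG n d r) ->
  (q < n)%nat -> (q' < n)%nat -> 0 < dl -> dl <= d q q' ->
  dl <= sumR (map (fball d r dl q) (seq 0 n)).
Proof.
  intros Hm Hr Hc Hq Hq' Hdl Hqq.
  destruct (Hc q q' Hq Hq') as [p Hp].
  destruct (walk_nodup _ _ _ _ Hp) as [p' [Hp' [Hnd _]]].
  assert (Hqq0 : d q q = 0) by (destruct Hm as [_ [H _]]; apply H; auto).
  pose proof (telescope n d r dl q q p' q' Hm Hr Hq Hq Hp' ltac:(lra) Hqq).
  eapply Rle_trans; [|apply sum_incl_NoDup; eauto].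
  - lra.
  - intros y [Hy|Hy]; apply in_seq; [lia|].
    assert (y < n)%nat; [|lia].
    eapply (walk_vertices (SDG n d r) (fun b => (b < n)%nat)); eauto.
    intros a b [_ [Hb _]]; auto.
  - intros x Hx. apply fball_nonneg. apply Hr. apply in_seq in Hx. lia.
Qed.

Definition separated (d : nat -> nat -> R) (dl : R) (Q : list nat) :=
  forall a b, In a Q -> In b Q -> a <> b -> dl <= d a b.

Lemma balls_disjoint n d r dl Q v :
  is_metric n d -> (v < n)%nat -> 0 <= r v -> NoDup Q -> (forall q, In q Q -> (q < n)%nat) ->
  separated d (2 * dl) Q ->
  sumR (map (fun q => fball d r dl q v) Q) <= r v.
Proof.
  intros Hm Hv Hr. induction Q as [|q Q IH]; intros Hnd HQ Hs; simpl; [lra|].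
  inversion Hnd; subst.
  assert (HQ' : forall q, In q Q -> (q < n)%nat) by (intros; apply HQ; right; auto).
  assert (Hs' : separated d (2*dl) Q) by (intros a b Ha Hb; apply Hs; right; auto).
  unfold fball at 1. destruct (Rlt_dec (d q v) dl) as [Hlt|Hge].
  - assert (sumR (map (fun q0 => fball d r dl q0 v) Q) = 0).
    { assert (forall q', In q' Q -> fball d r dl q' v = 0).
      { intros q' Hq'. unfold fball. destruct (Rlt_dec (d q' v) dl); auto.
        exfalso. assert (q <> q') by (intros E; subst; contradiction).
        assert (2 * dl <= d q q') by (apply Hs; [left|right|]; auto).
        assert (d q q' <= d q v + d v q').
        { destruct Hm as [_ [_ [_ Ht]]]. apply Ht; auto. apply HQ; left; auto. }
        rewrite (metric_sym n d v q') in H3 by auto. lra. }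
      clear -H. induction Q as [|a Q IH]; simpl; [auto|].
      rewrite H by (left; auto). rewrite IH; [lra|]. intros; apply H; right; auto. }
    lra.
  - specialize (IH H2 HQ' Hs'). lra.
Qed.

Lemma LB n d r dl Q :
  is_metric n d -> (forall v, (v < n)%nat -> 0 <= r v) -> connected n (SDG n d r) ->
  NoDup Q -> (forall q, In q Q -> (q < n)%nat) -> separated d dl Q -> (2 <= length Q)%nat -> 0 < dl ->
  INR (length Q) * dl <= 2 * COST n r.
Proof.
  intros Hm Hr Hc Hnd HQ Hs Hl Hdl.
  assert (Hex : forall q, In q Q -> exists q', In q' Q /\ q' <> q).
  { intros q Hq. destruct Q as [|a [|b Q']]; simpl in Hl; try lia.
    inversion Hnd; subst. destruct (Nat.eq_dec a q).
    - exists b. split; [right; left; auto|]. intros E. subst. apply H1. left; auto.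
    - exists a. split; [left; auto|auto]. }
  assert (H1 : sumR (map (fun q => dl / 2) Q) <= sumR (map (fun q => sumR (map (fball d r (dl/2) q) (seq 0 n))) Q)).
  { apply sum_map_le. intros q Hq. destruct (Hex q Hq) as [q' [Hq' Hne]].
    assert (dl <= d q q') by (apply Hs; auto).
    apply (ball_sum n d r (dl/2) q q'); auto; lra. }
  rewrite sum_map_const in H1.
  rewrite (sum_exchange (fun q v => fball d r (dl/2) q v)) in H1.
  assert (H2 : sumR (map (fun v => sumR (map (fun q => fball d r (dl/2) q v) Q)) (seq 0 n)) <= COST n r).
  { unfold COST. apply sum_map_le. intros v Hv. apply in_seq in Hv.
    apply balls_disjoint with n; auto; try lia. apply Hr; lia.
    intros a b Ha Hb Hab. replace (2 * (dl/2)) with dl by field. auto. }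
  lra.
Qed.

Definition heavyb (d : nat -> nat -> R) (dl : R) (e : nat * nat) : bool :=
  if Rle_dec dl (d (fst e) (snd e)) then true else false.

Lemma prim_sep n d r' dl T :
  is_metric n d -> prim (SDG n d r') d n T ->
  forall e1 e2, In e1 T -> In e2 T -> dl <= d (fst e1) (snd e1) -> dl <= d (fst e2) (snd e2) ->
  snd e1 <> snd e2 -> dl <= d (snd e1) (snd e2).
Proof.
  intros Hm. induction T as [|[p v] T IH]; intros HT e1 e2 H1 H2 Hd1 Hd2 Hne; [destruct H1|].
  simpl in HT. destruct HT as [HT' [Hp [Hv [Hvn [Hpv Hmin]]]]].
  assert (key : forall e, In e T -> dl <= d (fst e) (snd e) -> dl <= d p v -> dl <= d (snd e) v).
  { intros e He Hde Hdv. destruct (Rle_dec dl (d (snd e) v)) as [Hle|Hlt]; auto. exfalso.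
    destruct (prim_edges _ _ _ _ HT' e He) as [Hf [Hs [Hfs [Hr1 Hr2]]]].
    destruct Hpv as [_ [_ [_ [_ Hrv]]]].
    assert (Hin : In (snd e) (vis T)) by (right; apply in_map; auto).
    assert (Hsdg : SDG n d r' (snd e) v).
    { repeat split; auto. intros E. subst. contradiction. lra. lra. }
    specialize (Hmin _ _ Hin Hv Hvn Hsdg). lra. }
  destruct H1 as [H1|H1]; destruct H2 as [H2|H2].
  - subst. contradiction.
  - subst. simpl in *.
    destruct (prim_edges _ _ _ _ HT' e2 H2) as [_ [Hs _]].
    rewrite (metric_sym n d v (snd e2) Hm Hvn Hs). apply key; auto.
  - subst. simpl in *. apply key; auto.
  - apply IH; auto.
Qed.

Lemma nodup_map_filter {A B} (f : A -> B) (P : A -> bool) l :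
  NoDup (map f l) -> NoDup (map f (filter P l)).
Proof.
  induction l as [|a l IH]; simpl; intros H; [constructor|]. inversion H; subst.
  destruct (P a); simpl; auto. constructor; auto.
  intros Hc. apply H2. apply in_map_iff in Hc. destruct Hc as [x [Hx Hin]].
  apply filter_In in Hin. apply in_map_iff. exists x; tauto.
Qed.

Lemma COST_nonneg n r : (forall v, (v < n)%nat -> 0 <= r v) -> 0 <= COST n r.
Proof. intros H. apply sum_map_nonneg. intros x Hx. apply in_seq in Hx. apply H; lia. Qed.

Lemma heavy_count n d r' r dl T :
  is_metric n d -> (0 < n)%nat -> prim (SDG n d r') d n T ->
  (forall v, (v < n)%nat -> 0 <= r v) -> connected n (SDG n d r) -> 0 < dl ->
  INR (length (filter (heavyb d dl) T)) * dl <= 2 * COST n r.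
Proof.
  intros Hm Hn HT Hr Hc Hdl.
  pose proof (COST_nonneg n r Hr) as Hcost.
  set (H := filter (heavyb d dl) T).
  assert (HH : forall e, In e H -> In e T /\ dl <= d (fst e) (snd e)).
  { intros e He. apply filter_In in He. destruct He as [He Hb]. unfold heavyb in Hb.
    destruct (Rle_dec _ _); [auto|discriminate]. }
  assert (HH0 := HH). destruct H as [|e [|e' H']] eqn:EH.
  - simpl. lra.
  - destruct (HH e (or_introl eq_refl)) as [He Hde].
    destruct (prim_edges _ _ _ _ HT e He) as [Hf [Hs [Hfs _]]].
    assert (L := LB n d r dl [fst e; snd e] Hm Hr Hc).
    simpl in L. simpl.
    assert (2 * dl <= 2 * COST n r); [|lra].
    replace (2 * dl) with (INR 2 * dl) by (simpl; lra). apply L; auto.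
    + constructor; [simpl; intuition|constructor; [simpl; auto|constructor]].
    + intros q [Hq|[Hq|[]]]; subst; auto.
    + intros a b [Ha|[Ha|[]]] [Hb|[Hb|[]]] Hab; subst; try congruence; auto.
      rewrite (metric_sym n d (snd e) (fst e) Hm); auto.
  - rewrite <- EH. replace (length H) with (length (map snd H)) by apply length_map.
    apply (LB n d r dl); auto.
    + unfold H. apply nodup_map_filter. pose proof (prim_nodup _ _ _ _ HT) as ND.
      inversion ND; auto.
    + intros q Hq. apply in_map_iff in Hq. destruct Hq as [x [Hx Hin]]. subst.
      rewrite EH in Hin; destruct (HH0 x Hin) as [Hx _]. destruct (prim_edges _ _ _ _ HT x Hx) as [_ [Hs _]]. auto.
    + intros a b Ha Hb Hab. apply in_map_iff in Ha. apply in_map_iff in Hb.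
      destruct Ha as [x [Hx Hxin]]. destruct Hb as [y [Hy Hyin]]. subst.
      rewrite EH in Hxin, Hyin; destruct (HH0 x Hxin). destruct (HH0 y Hyin). eapply prim_sep; eauto.
    + rewrite length_map, EH. simpl. lia.
Qed.

Fixpoint Hn (k : nat) : R := match k with O => 0 | S k => Hn k + / INR (S k) end.

Definition geb (dl x : R) : bool := if Rle_dec dl x then true else false.

Lemma filter_len_app_le (P : R -> bool) a b m :
  (length (filter P (a ++ b)) <= length (filter P (a ++ m :: b)))%nat.
Proof.
  rewrite !filter_app, !length_app. simpl. destruct (P m); simpl; lia.
Qed.

Lemma Hn_nonneg k : 0 <= Hn k.
Proof.
  induction k; [simpl; lra|]. change (Hn (S k)) with (Hn k + / INR (S k)). assert (0 < / INR (S k)).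
  { apply Rinv_0_lt_compat. apply lt_0_INR. lia. } lra.
Qed.

Lemma harm_list K : forall N (l : list R), length l = N ->
  (forall x, In x l -> 0 <= x) ->
  (forall dl, 0 < dl -> INR (length (filter (geb dl) l)) * dl <= K) ->
  sumR l <= K * Hn N.
Proof.
  induction N as [|N IH]; intros l Hl Hnn Hc.
  - destruct l; [simpl; lra|discriminate].
  - destruct (finite_min (fun _ => True) (fun x => x) l) as [m [Hm [_ Hmin]]].
    { destruct l; [discriminate|]. exists r; simpl; auto. }
    destruct (in_split _ _ Hm) as [a [b Hab]]. subst l.
    assert (Hlen : length (a ++ b) = N) by (rewrite length_app in *; simpl in Hl; lia).
    assert (IH' : sumR (a ++ b) <= K * Hn N).
    { apply IH; auto.
      - intros x Hx. apply Hnn. apply in_app_or in Hx. apply in_or_app. destruct Hx; auto. right; right; auto.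
      - intros dl Hdl. eapply Rle_trans; [|apply Hc; auto].
        apply Rmult_le_compat_r; [lra|]. apply le_INR. apply filter_len_app_le. auto. }
    rewrite sumR_app. change (sumR (m :: b)) with (m + sumR b). change (Hn (S N)) with (Hn N + / INR (S N)). rewrite sumR_app in IH'.
    assert (Hm0 : 0 <= m) by auto.
    assert (HN : 0 < INR (S N)) by (apply lt_0_INR; lia).
    assert (HmK : INR (S N) * m <= K).
    { destruct (Rle_lt_or_eq_dec 0 m Hm0) as [Hpos|Hz].
      - specialize (Hc m Hpos).
        assert (filter (geb m) (a ++ m :: b) = a ++ m :: b).
        { apply forallb_filter_id. apply forallb_forall. intros x Hx.
          unfold geb. destruct (Rle_dec m x) as [_|Hn']; [auto|]. exfalso. apply Hn'. apply Hmin; auto. }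
        rewrite H in Hc. rewrite <- Hl. auto.
      - subst m. specialize (Hc 1 ltac:(lra)).
        assert (0 <= INR (length (filter (geb 1) (a ++ 0 :: b)))) by apply pos_INR. lra. }
    assert (m <= K * / INR (S N)).
    { apply Rmult_le_reg_l with (INR (S N)); auto.
      replace (INR (S N) * (K * / INR (S N))) with K by (field; lra). auto. }
    lra.
Qed.

Lemma Hn_ln k : (1 <= k)%nat -> Hn k <= 1 + ln (INR k).
Proof.
  induction k as [|k IH]; intros Hk; [lia|].
  destruct k as [|k].
  - simpl. rewrite ln_1. lra.
  - specialize (IH ltac:(lia)).
    change (Hn (S (S k))) with (Hn (S k) + / INR (S (S k))).
    set (a := INR (S k)) in *. assert (Ha : 0 < a) by (apply lt_0_INR; lia).
    replace (INR (S (S k))) with (a + 1) by (unfold a; rewrite (S_INR (S k)); auto).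
    assert (Hkey : / (a + 1) <= ln ((a + 1) / a)).
    { assert (Hexp : exp (/ (a+1)) <= (a + 1) / a).
      { pose proof (exp_ineq1_le (- / (a+1))).
        assert (Heq : 1 + - / (a+1) = a / (a+1)) by (field; lra).
        rewrite Heq in H. rewrite exp_Ropp in H.
        assert (0 < a / (a+1)) by (apply Rdiv_lt_0_compat; lra).
        apply Rinv_le_contravar in H; auto.
        rewrite Rinv_inv in H. replace (/ (a / (a+1))) with ((a+1)/a) in H by (field; lra). auto. }
      destruct (Rle_lt_or_eq_dec _ _ Hexp) as [Hl|He].
      - apply ln_increasing in Hl; [|apply exp_pos]. rewrite ln_exp in Hl. lra.
      - rewrite <- He, ln_exp. lra. }
    assert (ln (a + 1) = ln a + ln ((a+1)/a)).
    { rewrite <- ln_mult; [|lra|apply Rdiv_lt_0_compat; lra]. f_equal. field. lra. }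
    lra.
Qed.

Fixpoint lists_of {X} (l : list X) (k : nat) : list (list X) :=
  match k with
  | O => [[]]
  | S k => flat_map (fun x => map (cons x) (lists_of l k)) l
  end.

Lemma lists_of_in {X} (l : list X) t : (forall x, In x t -> In x l) -> In t (lists_of l (length t)).
Proof.
  induction t as [|a t IH]; simpl; intros H; [auto|].
  apply in_flat_map. exists a. split; auto. apply in_map. auto.
Qed.

Lemma tree_exists n (E : nat -> nat -> Prop) w :
  (forall a b, E a b -> (a < n)%nat /\ (b < n)%nat) -> connected n E ->
  exists T, is_spanning_tree n E T /\ (0 < n -> prim E w n T)%nat.
Proof.
  intros HE Hc. destruct n as [|n].
  - exists []. split; [|lia]. split; [intros e []|]. split; [auto|]. intros u v Hu; lia.
  - destruct (prim_exists E w (S n) HE Hc ltac:(lia) (S n - 1) (le_n _)) as [T [HT Hl]].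
    exists T. split; auto. apply prim_spanning with w; auto. lia.
Qed.

Lemma SDG_bound n d r a b : SDG n d r a b -> (a < n)%nat /\ (b < n)%nat.
Proof. intros [? [? _]]; auto. Qed.

Lemma st_edges_ok n d r T : is_spanning_tree n (SDG n d r) T -> edges_ok n T.
Proof. intros [H _] e He. destruct (H e He) as [? [? [? _]]]. auto. Qed.

Lemma st_h_le n d r T v : is_spanning_tree n (SDG n d r) T -> 0 <= r v ->
  heaviest_incident d T v <= r v.
Proof.
  intros [H _] Hv. apply h_le; auto. intros e He. destruct (H e He) as [_ [_ [_ [? ?]]]]. auto.
Qed.

Lemma feasible_tree n d rb r : (forall v, (v < n)%nat -> r v <= rb v) -> (forall v, (v < n)%nat -> 0 <= r v) ->
  connected n (SDG n d r) ->
  exists T, is_spanning_tree n (SDG n d rb) T /\ forall v, (v < n)%nat -> heaviest_incident d T v <= r v.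
Proof.
  intros Hle H0 Hc. destruct (tree_exists n (SDG n d r) d (SDG_bound n d r) Hc) as [T [HT _]].
  exists T. split.
  - destruct HT as [He [Hl Hcc]]. split; [|auto].
    intros e Hin. destruct (He e Hin) as [Ha [Hb [Hab [H1 H2]]]]. repeat split; auto.
    eapply Rle_trans; [apply H1|apply Hle; auto]. eapply Rle_trans; [apply H2|apply Hle; auto].
  - intros v Hv. eapply st_h_le; eauto.
Qed.

Lemma opt_exists n d rb : is_metric n d -> (forall v, (v < n)%nat -> 0 <= rb v) ->
  connected n (SDG n d rb) ->
  exists T, is_spanning_tree n (SDG n d rb) T /\ is_OPT n d rb (COST n (heaviest_incident d T)).
Proof.
  intros Hm Hrb Hc.
  set (cands := lists_of (list_prod (seq 0 n) (seq 0 n)) (n - 1)).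
  assert (Hcand : forall T, is_spanning_tree n (SDG n d rb) T -> In T cands).
  { intros T HT. unfold cands. destruct HT as [He [Hl _]]. rewrite <- Hl. apply lists_of_in.
    intros [a b] Hab. destruct (He _ Hab) as [Ha [Hb _]]. apply in_prod; apply in_seq; simpl in *; lia. }
  destruct (finite_min (is_spanning_tree n (SDG n d rb)) (fun T => COST n (heaviest_incident d T)) cands)
    as [T [_ [HT Hmin]]].
  { destruct (tree_exists n (SDG n d rb) d (SDG_bound n d rb) Hc) as [T [HT _]]. eauto. }
  exists T. split; auto. split.
  - exists (heaviest_incident d T). split; auto. split.
    + intros v Hv. split; [apply h_nonneg|]. eapply st_h_le; eauto.
    + apply h_conn; auto. eapply st_edges_ok; eauto. apply HT.
  - intros r [Hf Hcr].
    destruct (feasible_tree n d rb r) as [T' [HT' Hle]]; auto; try (intros v Hv; apply Hf; auto).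
    eapply Rle_trans; [apply (Hmin T'); auto|].
    unfold COST. apply sum_map_le. intros v Hv. apply in_seq in Hv. apply Hle. lia.
Qed.

Lemma weight_nonneg n d T : is_metric n d -> edges_ok n T -> 0 <= weight d T.
Proof.
  intros Hm Hok. apply sum_map_nonneg. intros e He. destruct (Hok e He) as [? [? _]].
  eapply metric_nonneg; eauto.
Qed.

Lemma small_tree n E T : (n <= 1)%nat -> is_spanning_tree n E T -> T = [].
Proof. intros Hn [_ [Hl _]]. destruct T; auto. simpl in Hl. lia. Qed.

Lemma complete_conn n d : connected n (SDG n d (fun _ => diam n d)).
Proof.
  intros u v Hu Hv. destruct (Nat.eq_dec u v).
  - exists []. simpl. auto.
  - exists [v]. simpl. split; auto. repeat split; auto; apply d_le_diam; auto.
Qed.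

Lemma prim_weight_bound n d r' r P :
  is_metric n d -> (0 < n)%nat -> prim (SDG n d r') d n P -> length P = (n - 1)%nat ->
  (forall v, (v < n)%nat -> 0 <= r v) -> connected n (SDG n d r) ->
  weight d P <= 2 * COST n r * Hn (n - 1).
Proof.
  intros Hm Hn HP Hl Hr Hc. unfold weight.
  apply harm_list.
  - rewrite length_map; auto.
  - intros x Hx. apply in_map_iff in Hx. destruct Hx as [e [He Hin]]. subst.
    destruct (prim_edges _ _ _ _ HP e Hin) as [? [? _]]. eapply metric_nonneg; eauto.
  - intros dl Hdl. rewrite filter_map_swap, length_map.
    apply (heavy_count n d r' r dl P); auto.
Qed.

Lemma bfs_weight n d r B : (0 < n)%nat -> prim (SDG n d r) d n B -> (forall v, (v < n)%nat -> 0 <= r v) ->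
  weight d B <= COST n r.
Proof.
  intros Hn HB Hr. unfold weight, COST.
  apply Rle_trans with (sumR (map r (map snd B))).
  - rewrite map_map. apply sum_map_le. intros e He.
    destruct (prim_edges _ _ _ _ HB e He) as [_ [_ [_ [_ ?]]]]. auto.
  - apply sum_incl_NoDup.
    + pose proof (prim_nodup _ _ _ _ HB) as ND. inversion ND; auto.
    + intros x Hx. apply in_seq. assert (x < n)%nat; [|lia].
      eapply prim_lt; eauto. right; auto.
    + intros x Hx. apply in_seq in Hx. apply Hr. lia.
Qed.

Lemma ln0 : ln 0 = 0.
Proof. unfold ln. destruct (Rlt_dec 0 0) as [Hc|Hc]; [exfalso; apply (Rlt_irrefl 0 Hc)|reflexivity]. Qed.

Lemma Hn_bound n : (2 <= n)%nat -> Hn (n - 1) <= 3 * ln (INR n).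
Proof.
  intros Hn. pose proof (Hn_ln (n - 1) ltac:(lia)).
  assert (ln (INR (n - 1)) <= ln (INR n)).
  { assert (0 < INR (n-1)) by (apply lt_0_INR; lia).
    assert (INR (n-1) < INR n) by (apply lt_INR; lia).
    left. apply ln_increasing; auto. }
  assert (ln 2 <= ln (INR n)).
  { destruct (Nat.eq_dec n 2).
    - subst. simpl. replace (1+1) with 2 by lra. lra.
    - left. apply ln_increasing; [lra|]. replace 2 with (INR 2) by (simpl; lra). apply lt_INR; lia. }
  pose proof ln_lt_2. lra.
Qed.

Theorem mainTheorem5 :
  exists C : R, 0 < C /\
  forall (n : nat) (d : nat -> nat -> R) (r' : nat -> R),
    is_metric n d ->
    (forall v, (v < n)%nat -> 0 < r' v) ->
    connected n (SDG n d r') ->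
    exists optM optMr : R,
      is_OPT_unbounded n d optM /\
      is_OPT n d r' optMr /\
      optM <= optMr /\
      optMr <= C * ln (INR n) * optM /\
      (forall T, is_MST n d (SDG n d r') T ->
         feasible n d r' (heaviest_incident d T) /\
         COST n (heaviest_incident d T) <= 2 * weight d T /\
         (forall T0, is_MST n d (complete n) T0 ->
            2 * weight d T <= C * ln (INR n) * weight d T0 /\
            weight d T0 <= optM)).
Proof.
  exists 24. split; [lra|]. intros n d r' Hm Hr' Hc.
  assert (Hr0 : forall v, (v < n)%nat -> 0 <= r' v) by (intros v Hv; left; auto).
  destruct (opt_exists n d (fun _ => diam n d) Hm ltac:(intros; apply diam_nonneg) (complete_conn n d))
    as [T1 [HT1 Hopt1]].
  destruct (opt_exists n d r' Hm Hr0 Hc) as [T2 [HT2 Hopt2]].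
  set (optM := COST n (heaviest_incident d T1)).
  set (optMr := COST n (heaviest_incident d T2)).
  assert (Hok1 := st_edges_ok _ _ _ _ HT1).
  assert (Hok2 := st_edges_ok _ _ _ _ HT2).
  assert (Hrs0 : forall v, (v < n)%nat -> 0 <= heaviest_incident d T1 v) by (intros; apply h_nonneg).
  assert (Hrsc : connected n (SDG n d (heaviest_incident d T1))).
  { apply h_conn; auto. apply HT1. }
  assert (HoptM0 : 0 <= optM) by (apply COST_nonneg; auto).
  assert (Hfeas : forall T, is_spanning_tree n (SDG n d r') T -> feasible n d r' (heaviest_incident d T)).
  { intros T HT. split.
    - intros v Hv. split; [apply h_nonneg|]. eapply st_h_le; eauto.
    - apply h_conn; auto. eapply st_edges_ok; eauto. apply HT. }
  destruct (tree_exists n (SDG n d r') d (SDG_bound n d r') Hc) as [P [HP HPp]].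
  destruct (tree_exists n (SDG n d (heaviest_incident d T1)) d (SDG_bound _ _ _) Hrsc) as [B [HB HBp]].
  assert (HBc : is_spanning_tree n (complete n) B).
  { destruct HB as [He [Hl Hcc]]. split; [|auto]. intros e Hin. destruct (He e Hin) as [? [? [? _]]].
    repeat split; auto. }
  assert (HBw : weight d B <= optM).
  { destruct (Nat.eq_dec n 0) as [E0|E0].
    - rewrite (small_tree n _ B ltac:(lia) HB). unfold weight. simpl. lra.
    - apply bfs_weight; [lia|apply HBp; lia|auto]. }
  exists optM, optMr. split; [exact Hopt1|]. split; [exact Hopt2|]. split.
  { destruct Hopt1 as [_ Hlow]. apply Hlow. split.
    - intros v Hv. split; [apply h_nonneg|]. apply h_le_diam; auto.
    - apply h_conn; auto. apply HT2. }
  assert (HPok := st_edges_ok _ _ _ _ HP).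
  split.
  { destruct Hopt2 as [_ Hlow]. eapply Rle_trans; [apply Hlow, Hfeas, HP|].
    eapply Rle_trans; [apply h_cost; auto|].
    destruct (le_lt_dec n 1) as [Hn1|Hn1].
    - rewrite (small_tree n _ P Hn1 HP). unfold weight. simpl.
      destruct n as [|[|]]; [simpl; rewrite ln0| simpl; rewrite ln_1|lia]; lra.
    - pose proof (prim_weight_bound n d r' _ P Hm ltac:(lia) (HPp ltac:(lia)) (proj1 (proj2 HP)) Hrs0 Hrsc).
      pose proof (Hn_bound n ltac:(lia)). fold optM in H.
      assert (0 <= Hn (n - 1)) by apply Hn_nonneg.
      assert (2 * weight d P <= 4 * optM * Hn (n - 1)) by lra.
      assert (optM * Hn (n - 1) <= optM * (3 * ln (INR n))) by (apply Rmult_le_compat_l; auto).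
      nra. }
  intros T [HT HTmin]. split; [apply Hfeas; auto|]. split.
  { apply h_cost; auto. eapply st_edges_ok; eauto. }
  intros T0 [HT0 HT0min]. split.
  - assert (HT0ok : edges_ok n T0).
    { intros e He. destruct HT0 as [H0 _]. destruct (H0 e He) as [? [? ?]]. auto. }
    assert (HwT0 := weight_nonneg n d T0 Hm HT0ok).
    assert (HTP := HTmin P HP).
    destruct (le_lt_dec n 1) as [Hn1|Hn1].
    + rewrite (small_tree n _ T Hn1 HT). unfold weight at 1. simpl.
      destruct n as [|[|]]; [simpl; rewrite ln0| simpl; rewrite ln_1|lia]; lra.
    + assert (Hh0 : forall v, (v < n)%nat -> 0 <= heaviest_incident d T0 v) by (intros; apply h_nonneg).
      assert (Hhc : connected n (SDG n d (heaviest_incident d T0))).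
      { apply h_conn; auto. apply HT0. }
      pose proof (prim_weight_bound n d r' _ P Hm ltac:(lia) (HPp ltac:(lia)) (proj1 (proj2 HP)) Hh0 Hhc).
      pose proof (h_cost n d T0 Hm HT0ok).
      pose proof (Hn_bound n ltac:(lia)).
      assert (0 <= Hn (n - 1)) by apply Hn_nonneg.
      assert (2 * COST n (heaviest_incident d T0) * Hn (n - 1) <= 4 * weight d T0 * Hn (n-1)) by nra.
      assert (weight d T0 * Hn (n - 1) <= weight d T0 * (3 * ln (INR n))) by (apply Rmult_le_compat_l; auto).
      nra.
  - eapply Rle_trans; [apply HT0min; exact HBc|exact HBw].
Qed.
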